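(* Under the setting and assumptions in the context, let $N_{AL}=\Pr(R=1,Y=0\mid Z=1)-\Pr(R=1,Y=0\mid Z=0)$ and suppose $N_{AL}\ge 0$ and $\max_{z}\Pr(R=1,Y=0\mid Z=z)>0$. Then $$\frac{N_{AL}}{1-\max_z\Pr(Y=1\mid Z=z)}\ \le\ APCE_{AL}\ \le\ \frac{N_{AL}}{\max_z\Pr(R=1,Y=0\mid Z=z)},$$ where maxima are over $z\in\{0,1\}$.
   Context: Units are drawn from a population (a probability space). Each unit has a binary assignment $Z\in\{0,1\}$ with $0<\Pr(Z=1)<1$, binary potential recommendations $R(0),R(1)\in\{0,1\}$, and binary potential outcomes $Y(0),Y(1)\in\{0,1\}$ indexed by the recommendation only (exclusion restriction). Observed quantities are $R=R(Z)$ and $Y=Y(R(Z))$. Assumptions: (Randomization) $Z$ is independent of $(R(0),R(1),Y(0),Y(1))$; (Monotonicity) $Y(1)\ge Y(0)$ almost surely. Always Low stratum $AL=\{Y(0)=Y(1)=0\}$; $APCE_{AL}=E[R(1)-R(0)\mid AL]$. *)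

(* Defs.v *)
From HB Require Import structures.
From mathcomp Require Import all_boot all_order all_algebra.
From mathcomp Require Import all_classical all_reals all_analysis.
Set Implicit Arguments. Unset Strict Implicit. Unset Printing Implicit Defensive.
Import Order.TTheory GRing.Theory Num.Theory.
Local Open Scope classical_set_scope.
Local Open Scope ring_scope.

Section Defs.
Context {d : measure_display} {T : measurableType d} {R : realType}.
Variable P : probability T R.

Definition Pr (A : set T) : R := fine (P A).

Definition cPr (A B : set T) : R := Pr (A `&` B) / Pr B.

Definition ev (X : T -> bool) (b : bool) : set T := [set w | X w = b].

Definition b2R (b : bool) : R := (b : nat)%:R.

Definition cE (X : T -> R) (A : set T) : R :=
  fine (\int[P]_(w in A) (X w)%:E) / Pr A.
End Defs.

(* the potential-outcome vector (R(0), R(1), Y(0), Y(1)) *)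
Definition pvec {T : Type} (R0 R1 Y0 Y1 : T -> bool) (w : T) :
  bool * bool * bool * bool := (R0 w, R1 w, Y0 w, Y1 w).

Definition indep_Z {d : measure_display} {T : measurableType d} {R : realType}
  (P : probability T R) (Z : T -> bool) {U : Type} (V : T -> U) : Prop :=
  forall (b : bool) (A : set U),
    P ([set w | Z w = b] `&` (V @^-1` A)) =
    (P [set w | Z w = b] * P (V @^-1` A))%E.

(* Main.v *)
Require Import Defs.
From HB Require Import structures.
From mathcomp Require Import all_boot all_order all_algebra.
From mathcomp Require Import all_classical all_reals all_analysis.
Import Order.TTheory GRing.Theory Num.Theory.
Local Open Scope classical_set_scope.
Local Open Scope ring_scope.

Definition bs (f : bool * bool * bool * bool -> bool) :
  set (bool * bool * bool * bool) := fun v => f v.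

Section H.
Context (d : measure_display) (T : measurableType d) (R : realType)
  (P : probability T R).

Lemma mev (X : T -> bool) b : measurable [set w | X w] ->
  measurable [set w | X w = b].
Proof.
move=> mX; case: b => //.
rewrite (_ : [set w | X w = false] = ~` [set w | X w]); first exact: measurableC.
by apply/seteqP; split=> w /=; case: (X w).
Qed.

Lemma mpre (R0 R1 Y0 Y1 : T -> bool)
  (mR0 : measurable [set w | R0 w])
  (mR1 : measurable [set w | R1 w]) (mY0 : measurable [set w | Y0 w])
  (mY1 : measurable [set w | Y1 w]) A :
  measurable (pvec R0 R1 Y0 Y1 @^-1` A).
Proof.
rewrite (_ : pvec R0 R1 Y0 Y1 @^-1` A =
   \bigcup_(v in A) pvec R0 R1 Y0 Y1 @^-1` [set v]); last first.
  apply/seteqP; split=> w /=.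
    by move=> Aw; exists (pvec R0 R1 Y0 Y1 w).
  by move=> [v Av /= ->].
apply: fin_bigcup_measurable; first exact: finite_finset.
move=> [[[a b] c] e] _.
rewrite (_ : _ @^-1` _ = [set w | R0 w = a] `&` [set w | R1 w = b]
   `&` [set w | Y0 w = c] `&` [set w | Y1 w = e]); last first.
  apply/seteqP; split=> w /=.
    by rewrite /pvec; case=> -> -> -> ->.
  by rewrite /pvec; case=> [[[-> ->] ->] ->].
by repeat apply: measurableI; apply: mev.
Qed.

Lemma Peq_null (A B N : set T) : measurable A -> measurable B ->
  measurable N -> P N = 0%E -> A `<=` B -> B `<=` A `|` N -> P A = P B.
Proof.
move=> mA mB mN N0 AB BAN; apply/le_anti/andP; split.
  by apply: le_measure => //; rewrite inE.
rewrite -(measureU0 (mu:=P) mA mN N0); apply: le_measure => //; rewrite inE //.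
exact: measurableU.
Qed.

Lemma Pr_le (A B : set T) : measurable A -> measurable B -> A `<=` B ->
  Pr P A <= Pr P B.
Proof.
move=> mA mB AB; apply: fine_le; rewrite ?fin_num_measure //.
by apply: le_measure => //; rewrite inE.
Qed.

Lemma in_setb (X : T -> bool) w : (w \in [set w | X w]) = X w.
Proof. by apply/idP/idP => [/set_mem|h]; [|exact: mem_set]. Qed.

Lemma Pr_ge0 (A : set T) : 0 <= Pr P A.
Proof. by apply: fine_ge0. Qed.

Lemma Pr_setC (A : set T) : measurable A -> Pr P (~` A) = 1 - Pr P A.
Proof.
move=> mA; rewrite /Pr probability_setC // fineB ?fin_num_measure //.
Qed.

End H.

Theorem mainTheorem8 (d : measure_display) (T : measurableType d)
  (R : realType) (P : probability T R)
  (Z R0 R1 Y0 Y1 : T -> bool)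
  (mZ : measurable [set w | Z w]) (mR0 : measurable [set w | R0 w])
  (mR1 : measurable [set w | R1 w]) (mY0 : measurable [set w | Y0 w])
  (mY1 : measurable [set w | Y1 w])
  (hZ : 0 < Pr P (ev Z true) < 1)
  (hrand : indep_Z P Z (pvec R0 R1 Y0 Y1))
  (hmono : P [set w | Y0 w && ~~ Y1 w] = 0%E) :
  let Robs := fun w => if Z w then R1 w else R0 w in
  let Yobs := fun w => if Robs w then Y1 w else Y0 w in
  let AL := [set w | Y0 w = false /\ Y1 w = false] in
  let APCE_AL := cE P (fun w => b2R (R1 w) - b2R (R0 w)) AL in
  let pRY z := cPr P (ev Robs true `&` ev Yobs false) (ev Z z) in
  let pY z := cPr P (ev Yobs true) (ev Z z) in
  let N_AL := pRY true - pRY false in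
  0 <= N_AL ->
  0 < Num.max (pRY false) (pRY true) ->
  N_AL / (1 - Num.max (pY false) (pY true)) <= APCE_AL <=
  N_AL / Num.max (pRY false) (pRY true).
Proof.
move=> Robs Yobs AL APCE pRY pY N hN hmax.
set pv := pvec R0 R1 Y0 Y1.
have mp : forall A, measurable (pv @^-1` A) by move=> A; exact: mpre.
have mZz : forall z, measurable [set w | Z w = z] by move=> z; exact: mev.
have red : forall z A E, E `&` ev Z z = [set w | Z w = z] `&` pv @^-1` A ->
    Pr P (ev Z z) != 0 -> cPr P E (ev Z z) = Pr P (pv @^-1` A).
  move=> z A E hE hz; rewrite /cPr hE /Pr hrand fineM ?fin_num_measure //.
  by rewrite -/(Pr P _) -/(Pr P _) mulrAC divff // mul1r.
have hZ1 : Pr P (ev Z true) != 0 by case/andP: hZ => h _; rewrite gt_eqF.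
have hZ0 : Pr P (ev Z false) != 0.
  rewrite (_ : ev Z false = ~` [set w | Z w]); last first.
    by apply/seteqP; split=> w /=; rewrite /ev /=; case: (Z w).
  rewrite Pr_setC // subr_eq0; case/andP: hZ => _ h.
  by rewrite eq_sym lt_eqF.
have e1 : pRY true = Pr P (pv @^-1` bs (fun '(r0,r1,y0,y1) => r1 && ~~ y1)).
  by apply: red => //; apply/seteqP; split=> w; rewrite /ev /pv /pvec /bs /Yobs /Robs /=;
  case: (Z w) (R0 w) (R1 w) (Y0 w) (Y1 w) => [] [] [] [] [] /=; by intuition (try discriminate).
have e0 : pRY false = Pr P (pv @^-1` bs (fun '(r0,r1,y0,y1) => r0 && ~~ y1)).
  by apply: red => //; apply/seteqP; split=> w; rewrite /ev /pv /pvec /bs /Yobs /Robs /=;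
  case: (Z w) (R0 w) (R1 w) (Y0 w) (Y1 w) => [] [] [] [] [] /=; by intuition (try discriminate).
have eY1 : pY true = Pr P (pv @^-1` bs (fun '(r0,r1,y0,y1) => if r1 then y1 else y0)).
  by apply: red => //; apply/seteqP; split=> w; rewrite /ev /pv /pvec /bs /Yobs /Robs /=;
  case: (Z w) (R0 w) (R1 w) (Y0 w) (Y1 w) => [] [] [] [] [] /=; by intuition (try discriminate).
have eY0 : pY false = Pr P (pv @^-1` bs (fun '(r0,r1,y0,y1) => if r0 then y1 else y0)).
  by apply: red => //; apply/seteqP; split=> w; rewrite /ev /pv /pvec /bs /Yobs /Robs /=;
  case: (Z w) (R0 w) (R1 w) (Y0 w) (Y1 w) => [] [] [] [] [] /=; by intuition (try discriminate).
set sAL := pv @^-1` bs (fun '(r0,r1,y0,y1) => ~~ y0 && ~~ y1).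
set sA1 := pv @^-1` bs (fun '(r0,r1,y0,y1) => ~~ y0 && ~~ y1 && r1).
set sA0 := pv @^-1` bs (fun '(r0,r1,y0,y1) => ~~ y0 && ~~ y1 && r0).
have mN : measurable [set w | Y0 w && ~~ Y1 w].
  exact: (mp (bs (fun '(r0,r1,y0,y1) => y0 && ~~ y1))).
have ea1 : pRY true = Pr P sA1.
  rewrite e1 /Pr; congr fine; symmetry; apply: (@Peq_null d T R P _ _ [set w | Y0 w && ~~ Y1 w]) => //; try exact: mp;
   move=> w; rewrite /sA1 /sA0 /sAL /pv /pvec /bs /=; case: (R0 w) (R1 w) (Y0 w) (Y1 w) => [] [] [] [] /=; by intuition (try discriminate).
have ea0 : pRY false = Pr P sA0.
  rewrite e0 /Pr; congr fine; symmetry; apply: (@Peq_null d T R P _ _ [set w | Y0 w && ~~ Y1 w]) => //; try exact: mp;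
   move=> w; rewrite /sA1 /sA0 /sAL /pv /pvec /bs /=; case: (R0 w) (R1 w) (Y0 w) (Y1 w) => [] [] [] [] /=; by intuition (try discriminate).
have hYb : forall f : bool * bool * bool * bool -> bool, (forall r0 r1 y0 y1, f (r0, r1, y0, y1) -> y0 || y1) ->
    Pr P (pv @^-1` bs f) <= 1 - Pr P sAL.
  move=> f hf; rewrite -Pr_setC; last exact: mp.
  apply: Pr_le; [exact: mp | apply: measurableC; exact: mp | ].
  move=> w; rewrite /sA1 /sA0 /sAL /pv /pvec /bs /= => /hf.
  by case: (Y0 w) (Y1 w) => [] [].
have hY1 : pY true <= 1 - Pr P sAL.
  by rewrite eY1; apply: hYb => -[] [] [] [].
have hY0 : pY false <= 1 - Pr P sAL.
  by rewrite eY0; apply: hYb => -[] [] [] [].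
have ha1 : Pr P sA1 <= Pr P sAL by apply: Pr_le; try exact: mp; move=> w; rewrite /sA1 /sA0 /sAL /pv /pvec /bs /=; case: (R0 w) (R1 w) (Y0 w) (Y1 w) => [] [] [] [] /=; by intuition (try discriminate).
have ha0 : Pr P sA0 <= Pr P sAL by apply: Pr_le; try exact: mp; move=> w; rewrite /sA1 /sA0 /sAL /pv /pvec /bs /=; case: (R0 w) (R1 w) (Y0 w) (Y1 w) => [] [] [] [] /=; by intuition (try discriminate).
have eAL : AL = sAL.
  apply/seteqP; split=> w; rewrite /AL /sAL /pv /pvec /bs /=;
  case: (Y0 w) (Y1 w) => [] [] /=; by intuition (try discriminate).
have eAPCE : APCE = (Pr P sA1 - Pr P sA0) / Pr P sAL.
  rewrite /APCE /cE eAL; congr (_ / _).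
  have -> : (\int[P]_(w in sAL) (b2R (R1 w) - b2R (R0 w))%:E)%E =
    (\int[P]_(w in sAL) (\1_[set w | R1 w] w)%:E - \int[P]_(w in sAL) (\1_[set w | R0 w] w)%:E)%E.
    rewrite -integralB; first last.
    - by apply: (integrableS measurableT) => //; [exact: mp | exact: integrable_indic].
    - by apply: (integrableS measurableT) => //; [exact: mp | exact: integrable_indic].
    - exact: mp.
    apply: eq_integral => w _; rewrite /b2R !indicE !in_setb EFinB.
    done.
  rewrite !integral_indic //; try exact: mp.
  rewrite (@fineB R); [|apply: fin_num_measure; apply: measurableI => //; exact: mp ..].
  by rewrite /Pr; congr (fine (P _) - fine (P _)); apply/seteqP; split=> w; rewrite /ev /sA1 /sA0 /sAL /pv /pvec /bs /Yobs /Robs /=;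
  case: (R0 w) (R1 w) (Y0 w) (Y1 w) => [] [] [] [] /=; by intuition (try discriminate).
rewrite eAPCE -/N.
have hNe : N = Pr P sA1 - Pr P sA0 by rewrite /N ea1 ea0.
set a := Pr P sAL.
have hm : Num.max (pRY false) (pRY true) <= a by rewrite ge_max ea1 ea0 ha1 ha0.
have apos : 0 < a by apply: lt_le_trans hm.
have hM : Num.max (pY false) (pY true) <= 1 - a by rewrite ge_max hY1 hY0.
rewrite -hNe; apply/andP; split.
  apply: ler_wpM2l => //; rewrite lef_pV2 ?posrE //.
    by rewrite lerBrDr addrC -lerBrDr.
  by apply: lt_le_trans apos _; rewrite lerBrDr addrC -lerBrDr.
apply: ler_wpM2l => //; rewrite lef_pV2 ?posrE //.
Qed.
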